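(* A space $X$ is locally realcompact if and only if $X\subseteq\beta X\setminus\mathrm{cl}_{\beta X}(\upsilon X\setminus X)$.
   Context: All spaces are completely regular Hausdorff. $\beta X$ is the Stone–Čech compactification and $\upsilon X\subseteq\beta X$ the Hewitt realcompactification of $X$. $X$ is locally realcompact if every point of $X$ has an open neighborhood in $X$ whose closure in $X$ is realcompact (homeomorphic to a closed subspace of a power of $\mathbb{R}$). *)

(* Defs.v *)
From Stdlib Require Import Reals List Classical.
Open Scope R_scope.

Record TopSpace := { carrier :> Type; opens : (carrier -> Prop) -> Prop }.

Definition is_topology (X : TopSpace) : Prop :=
  opens X (fun _ => True) /\
  (forall U V, opens X U -> opens X V -> opens X (fun x => U x /\ V x)) /\
  (forall F : (X -> Prop) -> Prop, (forall U, F U -> opens X U) ->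
     opens X (fun x => exists U, F U /\ U x)).

Definition closed_set (X : TopSpace) (S : X -> Prop) : Prop :=
  opens X (fun x => ~ S x).

Definition closure (X : TopSpace) (S : X -> Prop) (x : X) : Prop :=
  forall U, opens X U -> U x -> exists y, U y /\ S y.

Definition continuous (X Y : TopSpace) (f : X -> Y) : Prop :=
  forall V, opens Y V -> opens X (fun x => V (f x)).

Definition subspace (X : TopSpace) (P : X -> Prop) : TopSpace :=
  {| carrier := { x : X | P x };
     opens := fun W => exists U, opens X U /\ forall z, W z <-> U (proj1_sig z) |}.

Definition Rtop : TopSpace :=
  {| carrier := R;
     opens := fun U => forall x, U x -> exists eps, 0 < eps /\
                 forall y, Rabs (y - x) < eps -> U y |}.

Definition Rpow (I : Type) : TopSpace :=
  {| carrier := I -> R;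
     opens := fun U => forall x, U x -> exists (l : list I) (eps : R), 0 < eps /\
                 forall y, (forall i, In i l -> Rabs (y i - x i) < eps) -> U y |}.

Definition embedding (X Y : TopSpace) (h : X -> Y) : Prop :=
  (forall a b, h a = h b -> a = b) /\ continuous X Y h /\
  (forall U, opens X U -> exists V, opens Y V /\ forall x, U x <-> V (h x)).

Definition hausdorff (X : TopSpace) : Prop :=
  forall x y : X, x <> y -> exists U V, opens X U /\ opens X V /\ U x /\ V y /\
    forall z, ~ (U z /\ V z).

Definition completely_regular (X : TopSpace) : Prop :=
  forall (F : X -> Prop) (x : X), closed_set X F -> ~ F x ->
    exists f : X -> R, continuous X Rtop f /\ f x = 0 /\ forall y, F y -> f y = 1.

Definition tychonoff (X : TopSpace) : Prop :=
  is_topology X /\ hausdorff X /\ completely_regular X.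

Definition compact (X : TopSpace) : Prop :=
  forall F : (X -> Prop) -> Prop, (forall U, F U -> opens X U) ->
    (forall x, exists U, F U /\ U x) ->
    exists l : list (X -> Prop), (forall U, In U l -> F U) /\
      forall x, exists U, In U l /\ U x.

Definition realcompact (Y : TopSpace) : Prop :=
  exists (I : Type) (h : Y -> (I -> R)),
    embedding Y (Rpow I) h /\ closed_set (Rpow I) (fun z => exists y, h y = z).

Definition locally_realcompact (X : TopSpace) : Prop :=
  forall x : X, exists U, opens X U /\ U x /\ realcompact (subspace X (closure X U)).

(* This determines beta X up to homeomorphism over X. *)
Definition stone_cech (X K : TopSpace) (e : X -> K) : Prop :=
  is_topology K /\ compact K /\ hausdorff K /\ embedding X K e /\
  (forall k, closure K (fun k' => exists x, e x = k') k) /\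
  (forall f : X -> R, continuous X Rtop f -> (exists M, forall x, Rabs (f x) <= M) ->
     exists g : K -> R, continuous K Rtop g /\ forall x, g (e x) = f x).

(* Hewitt realcompactification inside beta X: p is in upsilon X iff every
   continuous real function on X extends continuously (real-valued) to X u {p}. *)
Definition in_upsilon (X K : TopSpace) (e : X -> K) (p : K) : Prop :=
  forall f : X -> R, continuous X Rtop f ->
    exists g : K -> R, (forall x, g (e x) = f x) /\
      continuous (subspace K (fun k => (exists x, e x = k) \/ k = p)) Rtop
                 (fun z => g (proj1_sig z)).

(* Main.v *)
Require Import Defs.
From Stdlib Require Import Reals List Classical.
From Stdlib Require Import ClassicalEpsilon FunctionalExtensionality PropExtensionality Lra.
Open Scope R_scope.

Lemma opens_ext (X : TopSpace) (U V : X -> Prop) :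
  opens X U -> (forall x, U x <-> V x) -> opens X V.
Proof.
  intros HU H. replace V with U; auto.
  apply functional_extensionality; intro x; apply propositional_extensionality; auto.
Qed.

Lemma opens_union (X : TopSpace) (HX : is_topology X) (U : X -> Prop) :
  (forall x, U x -> exists W, opens X W /\ W x /\ forall y, W y -> U y) -> opens X U.
Proof.
  intros H. destruct HX as [_ [_ Hu]].
  apply opens_ext with (U := fun x => exists W, (opens X W /\ forall y, W y -> U y) /\ W x).
  - apply Hu. intros W [HW _]; auto.
  - intro x; split.
    + intros [W [[_ HW] Wx]]; auto.
    + intro Ux. destruct (H x Ux) as [W [HW [Wx HWU]]]. exists W; auto.
Qed.

Lemma opens_inter (X : TopSpace) (HX : is_topology X) U V :
  opens X U -> opens X V -> opens X (fun x => U x /\ V x).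
Proof. destruct HX as [_ [H _]]; auto. Qed.

Lemma opens_true (X : TopSpace) (HX : is_topology X) : opens X (fun _ => True).
Proof. destruct HX as [H _]; auto. Qed.

Lemma list_combine (K : TopSpace) (HK : is_topology K) (k : K) {J : Type}
  (P : J -> (K -> Prop) -> Prop)
  (Pmono : forall j W W', P j W -> (forall y, W' y -> W y) -> P j W') (l : list J) :
  (forall j, In j l -> exists W, opens K W /\ W k /\ P j W) ->
  exists W, opens K W /\ W k /\ forall j, In j l -> P j W.
Proof.
  induction l as [|j l IH]; intros H.
  - exists (fun _ => True). split; [apply opens_true; auto|]. split; auto.
    intros j [].
  - destruct IH as [W1 [HW1 [W1k HP1]]]. { intros j' Hj'. apply H. right; auto. }
    destruct (H j (or_introl eq_refl)) as [W2 [HW2 [W2k HP2]]].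
    exists (fun y => W1 y /\ W2 y). split; [apply opens_inter; auto|]. split; auto.
    intros j' [<-|Hj'].
    + apply Pmono with W2; auto. intros y [_ ?]; auto.
    + apply Pmono with W1; auto. intros y [? _]; auto.
Qed.

Definition nbhd_cont (X : TopSpace) (f : X -> R) (x : X) : Prop :=
  forall eps, 0 < eps -> exists N, opens X N /\ N x /\ forall y, N y -> Rabs (f y - f x) < eps.

Lemma ball_open (c r : R) : opens Rtop (fun y => Rabs (y - c) < r).
Proof.
  simpl. intros x Hx. exists (r - Rabs (x - c)). split; [lra|].
  intros y Hy. pose proof (Rabs_triang (y - x) (x - c)).
  replace (y - x + (x - c)) with (y - c) in H by ring. lra.
Qed.

Lemma cont_to_eps (X : TopSpace) (f : X -> R) :
  continuous X Rtop f -> forall x, nbhd_cont X f x.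
Proof.
  intros Hf x eps Heps. exists (fun y => Rabs (f y - f x) < eps). split.
  - apply (Hf (fun r => Rabs (r - f x) < eps)). apply ball_open.
  - split; auto. unfold Rminus; rewrite Rplus_opp_r, Rabs_R0; auto.
Qed.

Lemma eps_to_cont (X : TopSpace) (HX : is_topology X) (f : X -> R) :
  (forall x, nbhd_cont X f x) -> continuous X Rtop f.
Proof.
  intros H V HV. apply opens_union; auto. intros x Vx.
  destruct (HV (f x) Vx) as [eps [Heps HE]].
  destruct (H x eps Heps) as [N [HN [Nx HNf]]].
  exists N; repeat split; auto.
Qed.

Lemma cont_lip (X : TopSpace) (HX : is_topology X) (f : X -> R) (c : R -> R) (L : R) :
  0 < L -> continuous X Rtop f -> (forall a b, Rabs (c a - c b) <= L * Rabs (a - b)) ->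
  continuous X Rtop (fun x => c (f x)).
Proof.
  intros HL Hf Hc. apply eps_to_cont; auto. intros x eps Heps.
  destruct (cont_to_eps X f Hf x (eps / L)) as [N [HN [Nx HNf]]].
  { apply Rdiv_lt_0_compat; auto. }
  exists N; repeat split; auto. intros y Ny. specialize (HNf y Ny).
  specialize (Hc (f y) (f x)).
  assert (L * Rabs (f y - f x) < L * (eps / L)) by (apply Rmult_lt_compat_l; auto).
  replace (L * (eps / L)) with eps in H by (field; lra). lra.
Qed.

Definition clamp (lo hi t : R) : R := Rmax lo (Rmin hi t).

Lemma clamp_lip lo hi a b : lo <= hi -> Rabs (clamp lo hi a - clamp lo hi b) <= 1 * Rabs (a - b).
Proof.
  intros H. unfold clamp, Rmax, Rmin.
  repeat destruct Rle_dec; unfold Rabs; repeat destruct Rcase_abs; lra.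
Qed.

Lemma clamp_bounds lo hi t : lo <= hi -> lo <= clamp lo hi t <= hi.
Proof. intros H. unfold clamp, Rmax, Rmin. repeat destruct Rle_dec; lra. Qed.

Lemma clamp_id lo hi t : lo <= t <= hi -> clamp lo hi t = t.
Proof. intros H. unfold clamp, Rmax, Rmin. repeat destruct Rle_dec; lra. Qed.

Lemma sub_cont (K : TopSpace) (HK : is_topology K) (S : K -> Prop) (g : K -> R) :
  (forall k, S k -> forall eps, 0 < eps -> exists W, opens K W /\ W k /\
      forall k', S k' -> W k' -> Rabs (g k' - g k) < eps) ->
  continuous (subspace K S) Rtop (fun z => g (proj1_sig z)).
Proof.
  intros H V HV. simpl.
  exists (fun k => exists W, (opens K W /\ forall k', S k' -> W k' -> V (g k')) /\ W k).
  split.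
  - destruct HK as [_ [_ Hu]]. apply Hu. intros W [HW _]; auto.
  - intros [k Sk]; simpl; split.
    + intro Vk. destruct (HV (g k) Vk) as [eps [Heps HE]].
      destruct (H k Sk eps Heps) as [W [HW [Wk HWg]]].
      exists W; repeat split; auto.
    + intros [W [[_ HW] Wk]]. auto.
Qed.

Lemma sub_cont_eps (K : TopSpace) (S : K -> Prop) (F : subspace K S -> R) :
  continuous (subspace K S) Rtop F ->
  forall a eps, 0 < eps -> exists W, opens K W /\ W (proj1_sig a) /\
      forall a', W (proj1_sig a') -> Rabs (F a' - F a) < eps.
Proof.
  intros H a eps Heps.
  destruct (H (fun r => Rabs (r - F a) < eps) (ball_open _ _)) as [W [HW HE]].
  exists W. split; auto. split.
  - apply HE. unfold Rminus; rewrite Rplus_opp_r, Rabs_R0; auto.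
  - intros a' Wa'. apply HE; auto.
Qed.

Lemma regular (K : TopSpace) (HK : is_topology K) (Hc : Defs.compact K) (Hh : hausdorff K)
  (V : K -> Prop) (k : K) : opens K V -> V k ->
  exists W, opens K W /\ W k /\ forall q, closure K W q -> V q.
Proof.
  intros HV Vk.
  set (F := fun O : K -> Prop => opens K O /\ ((forall y, O y -> V y) \/
        exists W, opens K W /\ W k /\ forall y, ~ (O y /\ W y))).
  destruct (Hc F) as [L [HL Hcov]].
  - intros O [? _]; auto.
  - intro q. destruct (classic (V q)) as [Vq|nVq].
    + exists V; split; auto. split; auto.
    + assert (q <> k) by (intro; subst; auto).
      destruct (Hh q k H) as [O [W [HO [HW [Oq [Wk Hd]]]]]].
      exists O. split; auto. split; auto. right. exists W; auto.
  - destruct (list_combine K HK k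
      (fun O W => (forall y, O y -> V y) \/ forall y, ~ (O y /\ W y))) with (l := L)
      as [W [HW [Wk HP]]].
    + intros O W W' [H|H] Hs; [left; auto|right]. intros y [Oy W'y]. apply (H y); auto.
    + intros O HO. destruct (HL O HO) as [_ [H|[W [HW [Wk Hd]]]]].
      * exists (fun _ => True). split; [apply opens_true; auto|]. split; auto.
      * exists W. auto.
    + exists W. split; auto. split; auto. intros q Hq.
      destruct (Hcov q) as [O [HOL Oq]].
      destruct (HP O HOL) as [H|H]; auto.
      destruct (HL O HOL) as [HO _].
      destruct (Hq O HO Oq) as [y [Oy Wy]]. exfalso; apply (H y); auto.
Qed.

Lemma lt_open (c : R) : opens Rtop (fun r => r < c).
Proof. simpl. intros x Hx. exists (c - x). split; [lra|]. intros y Hy.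
  apply Rabs_def2 in Hy. lra. Qed.

Lemma gt_open (c : R) : opens Rtop (fun r => c < r).
Proof. simpl. intros x Hx. exists (x - c). split; [lra|]. intros y Hy.
  apply Rabs_def2 in Hy. lra. Qed.

Lemma prod_est a a' b b' d1 d2 : Rabs a' <= 1 -> Rabs (b' - b) < d1 -> Rabs (a' - a) < d2 ->
  0 <= d2 -> Rabs (a' * b' - a * b) < d1 + Rabs b * d2.
Proof.
  intros H1 H2 H3 H4.
  replace (a' * b' - a * b) with (a' * (b' - b) + b * (a' - a)) by ring.
  eapply Rle_lt_trans; [apply Rabs_triang|]. rewrite !Rabs_mult.
  assert (Rabs a' * Rabs (b' - b) <= 1 * Rabs (b' - b)).
  { apply Rmult_le_compat_r; auto. apply Rabs_pos. }
  assert (Rabs b * Rabs (a' - a) <= Rabs b * d2).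
  { apply Rmult_le_compat_l; [apply Rabs_pos|lra]. }
  lra.
Qed.

Lemma div_est p h w c d : 1/2 <= p -> Rabs (p * h - w * c) < d -> Rabs (p - c) < d ->
  Rabs (h - w) < 2 * d * (1 + Rabs w).
Proof.
  intros Hp H1 H2.
  assert (E : p * (h - w) = (p * h - w * c) + w * (c - p)) by ring.
  assert (Rabs (p * (h - w)) <= Rabs (p * h - w * c) + Rabs w * Rabs (c - p)).
  { rewrite E, <- Rabs_mult. apply Rabs_triang. }
  rewrite Rabs_mult in H. rewrite (Rabs_right p) in H by lra.
  rewrite Rabs_minus_sym in H2.
  assert (Rabs w * Rabs (c - p) <= Rabs w * d).
  { apply Rmult_le_compat_l; [apply Rabs_pos|lra]. }
  assert (1/2 * Rabs (h - w) <= p * Rabs (h - w)).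
  { apply Rmult_le_compat_r; [apply Rabs_pos|lra]. }
  lra.
Qed.

Definition LIM (X K : TopSpace) (e : X -> K) (p : K) (F : X -> R) (r : R) : Prop :=
  forall eps, 0 < eps -> exists W, opens K W /\ W p /\ forall x, W (e x) -> Rabs (F x - r) < eps.

Lemma ups_lim (X K : TopSpace) (e : X -> K) (p : K) (F : X -> R) :
  in_upsilon X K e p -> continuous X Rtop F -> exists r, LIM X K e p F r.
Proof.
  intros Hu HF. destruct (Hu F HF) as [g [Hge Hgc]].
  exists (g p). intros eps Heps.
  destruct (sub_cont_eps _ _ _ Hgc (exist _ p (or_intror eq_refl)) eps Heps)
    as [W [HW [Wp HWg]]].
  exists W. split; auto. split; auto. intros x Wx.
  specialize (HWg (exist _ (e x) (or_introl (ex_intro _ x eq_refl))) Wx).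
  simpl in HWg. rewrite Hge in HWg. auto.
Qed.

Lemma fwd (X : TopSpace) (HX : tychonoff X)
  (K : TopSpace) (e : X -> K) (HK : stone_cech X K e) :
  locally_realcompact X ->
  (forall x : X,
     ~ closure K (fun k => in_upsilon X K e k /\ ~ (exists y, e y = k)) (e x)).
Proof.
  destruct HK as [HKt [HKc [HKh [[Einj [Econt Eopen]] [Hdense Hext]]]]].
  destruct HX as [HXt [HXh HXcr]].
  intros LRC x Hcl.
  destruct (LRC x) as [U [HU [Ux [I [h [[hinj [hcont hopen]] hclosed]]]]]].
  set (A := closure X U) in *.
  destruct (HXcr (fun y => ~ U y) x) as [phi0 [Hphi0c [phi0x phi0F]]].
  { unfold closed_set. apply opens_ext with U; auto. intro y; split; auto. apply NNPP. }
  { auto. }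
  set (phi := fun y => clamp 0 1 (phi0 y)).
  assert (Hphic : continuous X Rtop phi).
  { apply (cont_lip X HXt phi0 (clamp 0 1) 1); [lra|auto|]. intros; apply clamp_lip; lra. }
  assert (Hphib : forall y, 0 <= phi y <= 1) by (intro; apply clamp_bounds; lra).
  destruct (Hext phi Hphic) as [phih [Hphihc Hphihe]].
  { exists 1. intro y. specialize (Hphib y). rewrite Rabs_right; lra. }
  assert (HV' : opens K (fun k => phih k < 1/3)) by (apply (Hphihc (fun r => r < 1/3)); apply lt_open).
  destruct (Hcl _ HV') as [p [Vp [Hup HnD]]].
  { rewrite Hphihe. unfold phi. rewrite phi0x, clamp_id; lra. }
  set (psi := fun y => clamp 0 1 (2 - 3 * phi y)).
  assert (Hpsic : continuous X Rtop psi).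
  { apply (cont_lip X HXt phi (fun t => clamp 0 1 (2 - 3 * t)) 3); [lra|auto|]. intros a b.
    eapply Rle_trans; [apply clamp_lip; lra|].
    replace (2 - 3 * a - (2 - 3 * b)) with (-3 * (a - b)) by ring.
    rewrite Rabs_mult, Rabs_left by lra. lra. }
  assert (Fpsi1 : forall y, phi y < 1/2 -> 1/2 <= psi y).
  { intros y Hy. unfold psi, clamp, Rmax, Rmin. repeat destruct Rle_dec; lra. }
  assert (Fpsi0 : forall y, 2/3 < phi y -> psi y = 0).
  { intros y Hy. unfold psi, clamp, Rmax, Rmin. repeat destruct Rle_dec; lra. }
  assert (Fpsib : forall y, Rabs (psi y) <= 1).
  { intro y. assert (0 <= psi y <= 1) by (apply clamp_bounds; lra). rewrite Rabs_right; lra. }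
  assert (FU : forall y, phi y < 1 -> U y).
  { intros y Hy. apply NNPP. intro nU. unfold phi in Hy. rewrite (phi0F y nU), clamp_id in Hy; lra. }
  assert (FA : forall y, U y -> A y).
  { intros y Uy O HO Oy. exists y; auto. }
  set (hh := fun y => match excluded_middle_informative (A y) with
                      | left H => h (exist _ y H) | right _ => fun _ : I => 0 end).
  assert (hh_spec : forall y (H : A y), hh y = h (exist _ y H)).
  { intros y H. unfold hh. destruct excluded_middle_informative as [H'|H'].
    - rewrite (proof_irrelevance _ H H'). auto.
    - contradiction. }
  assert (hcoord : forall i, continuous (subspace X A) Rtop (fun a => h a i)).
  { intros i O HO. apply (hcont (fun w => O (w i))). simpl. intros w Ow.
    destruct (HO (w i) Ow) as [d [Hd HOd]]. exists (i :: nil), d. split; auto.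
    intros y Hy. apply HOd. apply Hy. left; auto. }
  set (f := fun i y => psi y * hh y i).
  assert (Hfc : forall i, continuous X Rtop (f i)).
  { intro i. apply eps_to_cont; auto. intros y eps Heps.
    destruct (Rlt_dec (2/3) (phi y)) as [Hgt|Hle].
    - exists (fun y' => 2/3 < phi y'). split; [apply (Hphic (fun r => 2/3 < r)); apply gt_open|].
      split; auto. intros y' Hy'. unfold f. rewrite Fpsi0, Fpsi0 by auto.
      rewrite Rmult_0_l, Rmult_0_l. unfold Rminus. rewrite Rplus_opp_r, Rabs_R0; auto.
    - assert (Ay : A y) by (apply FA, FU; lra).
      destruct (sub_cont_eps _ _ _ (hcoord i) (exist _ y Ay) (eps/2)) as [W [HW [Wy HWh]]].
      { lra. }
      set (hv := h (exist _ y Ay) i).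
      assert (Hd2 : 0 < eps / (2 * (Rabs hv + 1))).
      { apply Rdiv_lt_0_compat; auto. pose proof (Rabs_pos hv); lra. }
      destruct (cont_to_eps _ _ Hpsic y _ Hd2) as [N [HN [Ny HNpsi]]].
      exists (fun y' => W y' /\ N y' /\ phi y' < 1). split.
      { apply opens_inter; auto. apply opens_inter; auto. apply (Hphic (fun r => r < 1)); apply lt_open. }
      split; [repeat split; auto; lra|].
      intros y' [Wy' [Ny' Hy']]. assert (Ay' : A y') by (apply FA, FU; auto).
      unfold f. rewrite (hh_spec y' Ay'), (hh_spec y Ay).
      specialize (HWh (exist _ y' Ay') Wy'). simpl in HWh.
      eapply Rlt_le_trans; [apply prod_est; eauto; lra|]. fold hv.
      assert (Rabs hv * (eps / (2 * (Rabs hv + 1))) <= eps / 2).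
      { pose proof (Rabs_pos hv).
        replace (Rabs hv * (eps / (2 * (Rabs hv + 1)))) with (eps / 2 * (Rabs hv / (Rabs hv + 1))) by (field; lra).
        assert (Rabs hv / (Rabs hv + 1) <= 1).
        { unfold Rdiv. apply (Rmult_le_reg_r (Rabs hv + 1)); [lra|].
          rewrite Rmult_assoc, Rinv_l by lra. lra. }
        assert (0 <= eps/2) by lra.
        pose proof (Rmult_le_compat_l (eps/2) _ _ H1 H0). lra. }
      lra. }
  assert (Hz : forall i, exists r, LIM X K e p (f i) r) by (intro i; apply ups_lim; auto).
  set (z := fun i => proj1_sig (constructive_indefinite_description _ (Hz i))).
  assert (Hzs : forall i, LIM X K e p (f i) (z i)) by (intro i; exact (proj2_sig (constructive_indefinite_description _ (Hz i)))).
  destruct (ups_lim X K e p psi Hup Hpsic) as [c Hc].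
  assert (HW0 : opens K (fun k => phih k < 1/2)) by (apply (Hphihc (fun r => r < 1/2)); apply lt_open).
  assert (W0p : phih p < 1/2) by lra.
  assert (W0x : forall y, phih (e y) < 1/2 -> A y /\ 1/2 <= psi y).
  { intros y Hy. rewrite Hphihe in Hy. split; [apply FA, FU; lra| apply Fpsi1; auto]. }
  assert (Hc2 : 1/2 <= c).
  { apply Rnot_lt_le. intro Hlt. destruct (Hc (1/2 - c)) as [W [HW [Wp HWc]]]; [lra|].
    destruct (Hdense p (fun k => W k /\ phih k < 1/2)) as [k [[Wk Hk] [y <-]]].
    { apply opens_inter; auto. }
    { auto. }
    destruct (W0x y Hk) as [_ Hy]. specialize (HWc y Wk). apply Rabs_def2 in HWc. lra. }
  set (z' := fun i => z i / c).
  assert (L : forall j eps, 0 < eps -> exists W, opens K W /\ W p /\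
             forall y, W (e y) -> A y /\ Rabs (hh y j - z' j) < eps).
  { intros j eps Heps.
    set (d := eps / (2 * (1 + Rabs (z' j)))).
    assert (Hd : 0 < d) by (unfold d; apply Rdiv_lt_0_compat; auto; pose proof (Rabs_pos (z' j)); lra).
    destruct (Hzs j d Hd) as [W1 [HW1 [W1p H1]]].
    destruct (Hc d Hd) as [W2 [HW2 [W2p H2]]].
    exists (fun k => W1 k /\ W2 k /\ phih k < 1/2). split.
    { repeat apply opens_inter; auto. }
    split; [auto|]. intros y [W1y [W2y Hy]]. destruct (W0x y Hy) as [Ay Hpsiy].
    split; auto. specialize (H1 y W1y). specialize (H2 y W2y). unfold f in H1.
    assert (z j = z' j * c) by (unfold z'; field; lra).
    rewrite H in H1.
    pose proof (div_est _ _ _ _ _ Hpsiy H1 H2).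
    replace (2 * d * (1 + Rabs (z' j))) with eps in H0; auto.
    unfold d. field. pose proof (Rabs_pos (z' j)); lra. }
  assert (Lcomb : forall l eps, 0 < eps -> exists W, opens K W /\ W p /\
             forall y, W (e y) -> A y /\ forall j, In j l -> Rabs (hh y j - z' j) < eps).
  { intros l eps Heps.
    destruct (list_combine K HKt p (fun j W => forall y, W (e y) -> Rabs (hh y j - z' j) < eps)) with (l := l)
      as [W [HW [Wp HP]]].
    - intros j W W' H Hs y Wy. apply H. apply Hs; auto.
    - intros j _. destruct (L j eps Heps) as [W [HW [Wp HWP]]]. exists W. split; auto. split; auto.
      intros y Wy; apply HWP; auto.
    - exists (fun k => W k /\ phih k < 1/2). split; [apply opens_inter; auto|]. split; [auto|].
      intros y [Wy Hy]. split; [apply W0x; auto|]. intros j Hj. apply (HP j Hj); auto. }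
  destruct (classic (exists a, h a = z')) as [[a0 Ha0]|Hno].
  - destruct (classic (e (proj1_sig a0) = p)) as [Heq|Hne].
    { apply HnD. eauto. }
    destruct (HKh _ _ Hne) as [O [Q [HO [HQ [Oa [Qp Hd]]]]]].
    destruct (hopen (fun a => O (e (proj1_sig a)))) as [Vr [HVr HVrE]].
    { simpl. exists (fun y => O (e y)). split; [apply Econt; auto|]. intro; tauto. }
    assert (Vz : Vr z') by (rewrite <- Ha0; apply HVrE; auto).
    simpl in HVr. destruct (HVr z' Vz) as [l [eps [Heps Hball]]].
    destruct (Lcomb l eps Heps) as [W [HW [Wp HWP]]].
    destruct (Hdense p (fun k => W k /\ Q k)) as [k [[Wk Qk] [y <-]]].
    { apply opens_inter; auto. }
    { auto. }
    destruct (HWP y Wk) as [Ay Hl].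
    assert (O (e (proj1_sig (exist _ y Ay)))).
    { apply HVrE. apply Hball. intros j Hj. rewrite <- (hh_spec y Ay). auto. }
    apply (Hd (e y)); auto.
  - unfold closed_set in hclosed. simpl in hclosed.
    destruct (hclosed z' Hno) as [l [eps [Heps Hball]]].
    destruct (Lcomb l eps Heps) as [W [HW [Wp HWP]]].
    destruct (Hdense p W HW Wp) as [k [Wk [y <-]]].
    destruct (HWP y Wk) as [Ay Hl].
    apply (Hball (hh y)); auto. exists (exist _ y Ay). symmetry; apply hh_spec.
Qed.

Lemma comb2 {T J Y : Type} (g : J -> T -> R) (Q : Y -> T -> Prop) (L : list Y) :
  (forall O, In O L -> exists l eps, 0 < eps /\
       forall a, (forall j, In j l -> Rabs (g j a) < eps) -> Q O a) ->
  exists l eps, 0 < eps /\ forall O, In O L ->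
       forall a, (forall j, In j l -> Rabs (g j a) < eps) -> Q O a.
Proof.
  induction L as [|O L IH]; intros H.
  - exists nil, 1. split; [lra|]. intros O [].
  - destruct IH as [l1 [e1 [He1 H1]]]. { intros O' HO'. apply H; right; auto. }
    destruct (H O (or_introl eq_refl)) as [l2 [e2 [He2 H2]]].
    exists (l1 ++ l2), (Rmin e1 e2). split; [apply Rmin_glb_lt; auto|].
    intros O' [<-|HO'] a Ha.
    + apply H2. intros j Hj. eapply Rlt_le_trans; [apply Ha; apply in_or_app; auto|apply Rmin_r].
    + apply (H1 O' HO'). intros j Hj. eapply Rlt_le_trans; [apply Ha; apply in_or_app; auto|apply Rmin_l].
Qed.

Lemma bwd (X : TopSpace) (HX : tychonoff X)
  (K : TopSpace) (e : X -> K) (HK : stone_cech X K e) :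
  (forall x : X,
     ~ closure K (fun k => in_upsilon X K e k /\ ~ (exists y, e y = k)) (e x)) ->
  locally_realcompact X.
Proof.
  destruct HK as [HKt [HKc [HKh [[Einj [Econt Eopen]] [Hdense Hext]]]]].
  destruct HX as [HXt [HXh HXcr]].
  intros Hn x.
  assert (HV : exists V, opens K V /\ V (e x) /\
            forall k, V k -> ~ (in_upsilon X K e k /\ ~ exists y, e y = k)).
  { apply NNPP; intro Hno. apply (Hn x). intros V HV Vx. apply NNPP; intro H2.
    apply Hno. exists V; split; auto; split; auto. intros k Vk Sk. apply H2; eauto. }
  destruct HV as [V [HV [Vx HVS]]].
  destruct (regular K HKt HKc HKh V (e x) HV Vx) as [W [HW [Wx HWV]]].
  exists (fun y => W (e y)). split; [apply Econt; auto|]. split; [auto|].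
  set (A := closure X (fun y => W (e y))).
  set (I := {f : X -> R | continuous X Rtop f}).
  exists I, (fun a (f : I) => proj1_sig f (proj1_sig a)).
  split; [split; [|split]|].
  -
    intros [a Ha] [b Hb] Hab. simpl in Hab.
    assert (a = b).
    { apply NNPP; intro Hne. destruct (HXh a b Hne) as [O [Q [HO [HQ [Oa [Qb Hd]]]]]].
      destruct (HXcr (fun y => ~ O y) a) as [f [Hf [fa fF]]].
      { unfold closed_set. apply opens_ext with O; auto. intro y; split; auto. apply NNPP. }
      { auto. }
      pose proof (f_equal (fun w : I -> R => w (exist _ f Hf)) Hab) as E. simpl in E.
      rewrite fa, fF in E; [lra|]. intro Ob. apply (Hd b); auto. }
    subst. f_equal. apply proof_irrelevance.
  -
    intros O HO. simpl. exists (fun y => O (fun f : I => proj1_sig f y)). split.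
    2:{ intro z; tauto. }
    apply opens_union; auto. intros y Oy. simpl in HO.
    destruct (HO _ Oy) as [l [eps [Heps Hb]]].
    destruct (list_combine X HXt y (fun (f : I) N => forall y', N y' -> Rabs (proj1_sig f y' - proj1_sig f y) < eps)) with (l := l)
      as [N [HN [Ny HP]]].
    + intros j N N' H Hs y' Ny'. apply H, Hs; auto.
    + intros f _. destruct (cont_to_eps _ _ (proj2_sig f) y eps Heps) as [N [HN [Ny HNf]]].
      exists N. auto.
    + exists N. split; [auto|split; [auto|]]. intros y' Ny'. apply Hb. intros f Hf. apply (HP f Hf); auto.
  -
    intros Wsub [U0 [HU0 HE]].
    exists (fun w : I -> R => exists f : I, (forall y, ~ U0 y -> proj1_sig f y = 1) /\ Rabs (w f) < 1/2).
    split.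
    + simpl. intros w [f [Hf1 Hf2]]. exists (f :: nil), (1/2 - Rabs (w f)). split; [lra|].
      intros y Hy. exists f. split; auto. specialize (Hy f (or_introl eq_refl)).
      pose proof (Rabs_triang (y f - w f) (w f)). replace (y f - w f + w f) with (y f) in H by ring. lra.
    + intros a. split.
      * intro Wa. apply HE in Wa.
        destruct (HXcr (fun y => ~ U0 y) (proj1_sig a)) as [f [Hf [fa fF]]].
        { unfold closed_set. apply opens_ext with U0; auto. intro y; split; auto. apply NNPP. }
        { auto. }
        exists (exist _ f Hf). simpl. split; auto. rewrite fa, Rabs_R0. lra.
      * intros [f [Hf1 Hf2]]. apply HE. apply NNPP; intro nU. simpl in Hf2.
        rewrite Hf1 in Hf2 by auto. rewrite Rabs_R1 in Hf2. lra.
  -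
    unfold closed_set. simpl. intros w Hw. apply NNPP; intro Hneg.
    set (B := fun l eps (a : {y | A y}) => forall f : I, In f l -> Rabs (proj1_sig f (proj1_sig a) - w f) < eps).
    assert (Hcl' : forall l eps, 0 < eps -> exists a, B l eps a).
    { intros l eps Heps. apply NNPP; intro Hna. apply Hneg. exists l, eps. split; auto.
      intros y Hy [a Ha]. apply Hna. exists a. unfold B. intros f Hf. rewrite <- Ha in Hy. exact (Hy f Hf). }
    assert (Step1 : exists p, forall l eps, 0 < eps ->
               closure K (fun k => exists a, B l eps a /\ e (proj1_sig a) = k) p).
    { apply NNPP; intro Hnp.
      destruct (HKc (fun O => opens K O /\ exists l eps, 0 < eps /\
                       forall a, B l eps a -> ~ O (e (proj1_sig a)))) as [L [HL Hcov]].
      - intros O [? _]; auto.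
      - intro q. apply NNPP; intro Hq. apply Hnp. exists q. intros l eps Heps.
        apply NNPP; intro Hc. apply Hq. unfold closure in Hc.
        apply not_all_ex_not in Hc. destruct Hc as [O Hc].
        exists O. split; [split|].
        + apply NNPP; intro; apply Hc; intros; contradiction.
        + exists l, eps. split; auto. intros a Ba Oa. apply Hc. intros _ _. exists (e (proj1_sig a)). eauto.
        + apply NNPP; intro; apply Hc; intros; contradiction.
      - destruct (comb2 (fun (f : I) (a : {y | A y}) => proj1_sig f (proj1_sig a) - w f)
                   (fun O a => ~ O (e (proj1_sig a))) L) as [l [eps [Heps Hall]]].
        + intros O HO. destruct (HL O HO) as [_ [l [eps [Heps H]]]]. exists l, eps. auto.
        + destruct (Hcl' l eps Heps) as [a Ba]. destruct (Hcov (e (proj1_sig a))) as [O [HO Oa]].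
          apply (Hall O HO a); auto. }
    destruct Step1 as [p Hp].
    assert (Step2 : forall f : I, LIM X K e p (proj1_sig f) (w f)).
    { intros [F Fc]. simpl.
      set (M := Rabs (w (exist _ F Fc)) + 2). set (wf := w (exist _ F Fc)) in *.
      assert (HM : 0 <= M) by (unfold M; pose proof (Rabs_pos wf); lra).
      assert (Hwf : Rabs wf < M) by (unfold M; lra).
      assert (Hcw : clamp (-M) M wf = wf) by (apply clamp_id; apply Rabs_def2 in Hwf; lra).
      set (F0 := fun y => clamp (-M) M (F y)).
      assert (F0c : continuous X Rtop F0).
      { apply (cont_lip X HXt F (clamp (-M) M) 1); [lra|auto|]. intros; apply clamp_lip; lra. }
      destruct (Hext F0 F0c) as [g [Hgc Hge]].
      { exists M. intro y. assert (-M <= F0 y <= M) by (apply clamp_bounds; lra).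
        unfold Rabs; destruct Rcase_abs; lra. }
      assert (Hgp : g p = wf).
      { apply NNPP; intro Hne. set (d := Rabs (g p - wf)).
        assert (Hd : 0 < d) by (apply Rabs_pos_lt; intro; apply Hne; lra).
        destruct (cont_to_eps _ _ Hgc p (d/2)) as [N [HN [Np HNg]]]; [lra|].
        destruct (Hp (exist _ F Fc :: nil) (d/2) ltac:(lra) N HN Np) as [k [Nk [a [Ba <-]]]].
        specialize (HNg _ Nk). rewrite Hge in HNg.
        specialize (Ba _ (or_introl eq_refl)). simpl in Ba. fold wf in Ba.
        pose proof (clamp_lip (-M) M (F (proj1_sig a)) wf ltac:(lra)). rewrite Hcw in H.
        fold (F0 (proj1_sig a)) in H.
        pose proof (Rabs_triang (g p - F0 (proj1_sig a)) (F0 (proj1_sig a) - wf)).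
        replace (g p - F0 (proj1_sig a) + (F0 (proj1_sig a) - wf)) with (g p - wf) in H0 by ring.
        rewrite (Rabs_minus_sym (g p) (F0 (proj1_sig a))) in H0. fold d in H0. lra. }
      intros eps Heps.
      destruct (cont_to_eps _ _ Hgc p (Rmin eps 1)) as [N [HN [Np HNg]]].
      { apply Rmin_glb_lt; lra. }
      exists N. split; auto. split; auto. intros y Ny.
      specialize (HNg _ Ny). rewrite Hge, Hgp in HNg.
      assert (Rmin eps 1 <= eps) by apply Rmin_l. assert (Rmin eps 1 <= 1) by apply Rmin_r.
      set (m := Rmin eps 1) in *.
      assert (F0 y = F y).
      { apply Rabs_def2 in Hwf. apply Rabs_def2 in HNg. unfold F0, clamp, Rmax, Rmin in HNg |- *.
        assert (HMw : M = Rabs wf + 2) by reflexivity.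
        pose proof (Rle_abs wf). pose proof (Rle_abs (- wf)). rewrite Rabs_Ropp in *.
        repeat destruct Rle_dec; lra. }
      rewrite <- H1. lra. }
    assert (Step1n : forall O, opens K O -> O p -> exists a : {y | A y}, O (e (proj1_sig a))).
    { intros O HO Op. destruct (Hp nil 1 ltac:(lra) O HO Op) as [k [Ok [a [_ <-]]]]. eauto. }
    assert (Step3 : ~ exists x0, e x0 = p).
    { intros [x0 Hx0].
      assert (HA : A x0).
      { intros O HO Ox0. destruct (Eopen O HO) as [O' [HO' HOE]].
        destruct (Step1n O' HO') as [a Oa]. { rewrite <- Hx0. apply HOE; auto. }
        apply HOE in Oa. exact (proj2_sig a O HO Oa). }
      apply Hw. exists (exist _ x0 HA). apply functional_extensionality. intro f. simpl.
      apply NNPP; intro Hne.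
      destruct (Step2 f (Rabs (proj1_sig f x0 - w f))) as [N [HN [Np HNf]]].
      { apply Rabs_pos_lt. intro; apply Hne; lra. }
      rewrite <- Hx0 in Np. specialize (HNf x0 Np). lra. }
    assert (Step4 : in_upsilon X K e p).
    { intros F HF.
      set (g := fun k => match excluded_middle_informative (k = p) with
                | left _ => w (exist _ F HF)
                | right _ => match excluded_middle_informative (exists x, e x = k) with
                    | left H => F (proj1_sig (constructive_indefinite_description _ H))
                    | right _ => 0 end end).
      assert (Hge : forall y, g (e y) = F y).
      { intro y. unfold g. destruct excluded_middle_informative as [E|E].
        - exfalso; apply Step3; eauto.
        - destruct excluded_middle_informative as [H|H]; [|exfalso; eauto].
          destruct constructive_indefinite_description as [y' Hy']. simpl. apply Einj in Hy'. subst; auto. }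
      assert (Hgp : g p = w (exist _ F HF)).
      { unfold g. destruct excluded_middle_informative as [E|E]; auto. contradiction. }
      exists g. split; auto.
      apply sub_cont; auto. intros k Sk eps Heps. destruct Sk as [[x0 <-]| ->].
      - destruct (cont_to_eps _ _ HF x0 eps Heps) as [N [HN [Nx HNf]]].
        destruct (Eopen N HN) as [N' [HN' HNE]].
        assert (e x0 <> p) by (intro; apply Step3; eauto).
        destruct (HKh _ _ H) as [O [Q [HO [HQ [Ox [Qp Hd]]]]]].
        exists (fun k => N' k /\ O k). split; [apply opens_inter; auto|]. split; [split; auto; apply HNE; auto|].
        intros k' Sk' [N'k Ok]. destruct Sk' as [[y <-]| ->].
        + rewrite !Hge. apply HNf. apply HNE; auto.
        + exfalso. apply (Hd p); auto.
      - destruct (Step2 (exist _ F HF) eps Heps) as [N [HN [Np HNf]]].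
        exists N. split; auto. split; auto. intros k' Sk' Nk'. destruct Sk' as [[y <-]| ->].
        + rewrite Hge, Hgp. apply HNf; auto.
        + unfold Rminus; rewrite Rplus_opp_r, Rabs_R0; auto. }
    assert (Step5 : V p).
    { apply HWV. intros O HO Op. destruct (Step1n O HO Op) as [a Oa].
      destruct (proj2_sig a (fun y => O (e y)) (Econt O HO) Oa) as [y [Oy Wy]].
      exists (e y); auto. }
    apply (HVS p Step5). split; auto.
Qed.

Theorem lemma3p5 (X : TopSpace) (HX : tychonoff X)
  (K : TopSpace) (e : X -> K) (HK : stone_cech X K e) :
  locally_realcompact X <->
  (forall x : X,
     ~ closure K (fun k => in_upsilon X K e k /\ ~ (exists y, e y = k)) (e x)).
Proof.
  split; [apply fwd | apply bwd]; auto.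
Qed.
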